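(* Let $q$ be a prime power and let $n,k,r$ be integers with $n\le q-1$, $0<r<k\le n$, $r\mid k$, $(r+1)\mid n$ and $(r+1)\mid(q-1)$. Write $m=k/r$ and $n=(m+\ell)(r+1)$ with an integer $\ell\ge 0$, so that $t:=n-k-m=\ell(r+1)$. Let $\omega$ be a primitive element of $\mathbb F_q$ and $\alpha=\omega^{(q-1)/(r+1)}$. For $0\le i\le m+\ell-1$ and $j\ge 0$ let $$\mathbf v^{(j)}_i=\big((\omega^i)^j,(\omega^i\alpha)^j,\dots,(\omega^i\alpha^r)^j\big)\in\mathbb F_q^{r+1},$$ and let $\mathbf V^{(j)}=(\mathbf v^{(j)}_0,\dots,\mathbf v^{(j)}_{m+\ell-1})\in\mathbb F_q^n$. Let $\mathbf H$ be the $(m+\ell+\ell r)\times n$ matrix whose rows are: - the $m+\ell$ vectors $\mathbf e_b\in\mathbb F_q^n$ ($0\le b\le m+\ell-1$), where $\mathbf e_b$ has entries $1$ in coordinates $b(r+1),\dots,b(r+1)+r$ and $0$ elsewhere; - the $\ell r$ vectors $\mathbf V^{(j)}$ for $1\le j\le \ell(r+1)-1$ with $(r+1)\nmid j$. Then $\mathbf H$ has full rank $m+\ell+\ell r$. Moreover, the code $\mathcal C=\{\mathbf c\in\mathbb F_q^n:\mathbf H\mathbf c^{T}=\mathbf 0\}$ is a linear $[n,k,t+2]$ code. For every codeword $\mathbf c$ and every $b$, the sum of the coordinates of $\mathbf c$ in the group $\{b(r+1),\dots,b(r+1)+r\}$ is $0$; hence $\mathcal C$ has addition based repair and all-symbol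 locality $r$.
   Context: A linear code has addition based repair if every coordinate (node) $i$ has a set $J_i$ of other coordinates with $c_i=-\sum_{j\in J_i}c_j$ for all codewords $\mathbf c$. It has all-symbol locality $r$ if every node can be recovered, for all codewords, as a function of at most $r$ other nodes. *)

(* Defs.v *)
From HB Require Import structures.
From mathcomp Require Import all_boot all_order all_algebra.
Set Implicit Arguments. Unset Strict Implicit. Unset Printing Implicit Defensive.
Import GRing.Theory.
Local Open Scope ring_scope.

Section Defs.
Variable F : fieldType.

Definition wt n (c : 'rV[F]_n) : nat := #|[pred i : 'I_n | c 0 i != 0]|.

Definition code s n (H : 'M[F]_(s, n)) : 'M[F]_n := kermx H^T.
Definition codeword s n (H : 'M[F]_(s, n)) (c : 'rV[F]_n) : bool :=
  (c <= code H)%MS.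

Definition min_distance n (C : 'M[F]_n) (d : nat) : Prop :=
  (exists2 c : 'rV[F]_n, (c <= C)%MS & (c != 0) /\ wt c = d) /\
  (forall c : 'rV[F]_n, (c <= C)%MS -> c != 0 -> (d <= wt c)%N).

Definition is_nkd_code n (C : 'M[F]_n) (k d : nat) : Prop :=
  \rank C = k /\ min_distance C d.

Definition addition_based_repair n (C : 'M[F]_n) : Prop :=
  forall i : 'I_n, exists J : {set 'I_n}, i \notin J /\
    forall c : 'rV[F]_n, (c <= C)%MS -> c 0 i = - \sum_(j in J) c 0 j.

Definition all_symbol_locality n (C : 'M[F]_n) (r : nat) : Prop :=
  forall i : 'I_n, exists R : {set 'I_n},
    [/\ i \notin R, (#|R| <= r)%N &
      exists f : ('I_n -> F) -> F,
        (forall x y : 'I_n -> F, (forall j, j \in R -> x j = y j) -> f x = f y) /\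
        forall c : 'rV[F]_n, (c <= C)%MS -> c 0 i = f (fun j => c 0 j)].

(* The construction.  Coordinate p : 'I_n lies in group p %/ (r+1), at
   position p %% (r+1) inside the group. *)
Definition e_vec n r (b : nat) : 'rV[F]_n :=
  \row_(p < n) (if (p %/ r.+1 == b)%N then 1 else 0).

Definition V_vec n r (omega alpha : F) (j : nat) : 'rV[F]_n :=
  \row_(p < n) ((omega ^+ (p %/ r.+1) * alpha ^+ (p %% r.+1)) ^+ j).

Definition H_rows n r m l (omega alpha : F) : seq 'rV[F]_n :=
  [seq e_vec n r b | b <- iota 0 (m + l)] ++
  [seq V_vec n r omega alpha j | j <- iota 1 (l * r.+1).-1 & ~~ (r.+1 %| j)%N].

Definition H_mat n r m l (omega alpha : F) :
  'M[F]_(size (H_rows n r m l omega alpha), n) :=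
  \matrix_(i < size (H_rows n r m l omega alpha))
     nth 0 (H_rows n r m l omega alpha) i.
End Defs.

(* Main.v *)
Require Import Defs.
From HB Require Import structures.
From mathcomp Require Import all_boot all_order all_algebra.
From mathcomp Require Import zify.
Set Implicit Arguments. Unset Strict Implicit. Unset Printing Implicit Defensive.
Import GRing.Theory.
Local Open Scope ring_scope.

Section Main.
Variables (F : finFieldType) (q n k r m l : nat) (omega : F).
Hypotheses (hq : #|F| = q)
  (hnq : (n <= q - 1)%N) (hr0 : (0 < r)%N) (hrk : (r < k)%N) (hkn : (k <= n)%N)
  (hrdk : (r %| k)%N) (hrdn : (r.+1 %| n)%N) (hrdq : (r.+1 %| q - 1)%N)
  (hm : k = (m * r)%N) (hl : n = ((m + l) * r.+1)%N)
  (homega : (q - 1).-primitive_root omega).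

Definition alpha := omega ^+ ((q - 1) %/ r.+1).
Definition Qd := ((q - 1) %/ r.+1)%N.
Definition N := (m + l)%N.
Definition L := (l * r.+1)%N.
Definition xx (p : nat) : F := omega ^+ (p %/ r.+1) * alpha ^+ (p %% r.+1).

Lemma hQ : (Qd * r.+1 = q - 1)%N.
Proof. by rewrite /Qd divnK. Qed.

Lemma m_ge2 : (2 <= m)%N.
Proof.
move: hrk; rewrite hm; case: (m) => [|[|m']] //=; by rewrite ?mul0n ?mul1n ?ltnn.
Qed.

Lemma NleQ : (N <= Qd)%N.
Proof. by rewrite -(leq_pmul2r (ltn0Sn r)) hQ -hl. Qed.

Lemma alpha_r1 : alpha ^+ r.+1 = 1.
Proof. by rewrite /alpha -exprM hQ prim_expr_order. Qed.

Lemma xx_exp p : xx p = omega ^+ (p %/ r.+1 + Qd * (p %% r.+1)).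
Proof. by rewrite /xx /alpha exprD exprM. Qed.

Lemma xx_inj p p' : (p < n)%N -> (p' < n)%N -> xx p = xx p' -> p = p'.
Proof.
move=> hp hp'; rewrite !xx_exp => /eqP; rewrite (eq_prim_root_expr homega).
have bd : forall u, (u < n)%N -> (u %/ r.+1 + Qd * (u %% r.+1) < q - 1)%N.
  move=> u hu; rewrite -hQ.
  have h1 : (u %/ r.+1 < Qd)%N.
    apply: leq_trans NleQ; by rewrite ltn_divLR // -hl.
  have h2 : (u %% r.+1 <= r)%N by rewrite -ltnS ltn_pmod.
  apply: (@leq_trans (Qd + Qd * r)%N); first by rewrite -addSn leq_add // leq_mul2l h2 orbT.
  by rewrite mulnS.
rewrite (modn_small (bd _ hp)) (modn_small (bd _ hp')) => /eqP e.
have hQp : (0 < Qd)%N by apply: leq_trans NleQ; rewrite /N; move: m_ge2; case: (m) => //.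
have h1 : (p %/ r.+1 = p' %/ r.+1)%N.
  move: (congr1 (modn^~ Qd) e).
  rewrite !(addnC (_ %/ _)%N) !(mulnC Qd) !modnMDl !modn_small //; apply: leq_trans NleQ;
   by rewrite ltn_divLR // -hl.
have h2 : (p %% r.+1 = p' %% r.+1)%N.
  move: e; rewrite h1 => /addnI /eqP; rewrite eqn_mul2l => /orP [|/eqP //].
  by rewrite eqn0Ngt hQp.
by rewrite (divn_eq p r.+1) (divn_eq p' r.+1) h1 h2.
Qed.


Lemma count_nondvd (d ll : nat) : (0 < d)%N ->
  count (fun j => ~~ (d %| j)%N) (iota 0 (ll * d)) = (ll * d.-1)%N.
Proof.
move=> hd; elim: ll => [|ll IH]; first by rewrite !mul0n.
rewrite mulSnr iotaD count_cat IH add0n.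
case: d hd IH => // d _ IH /=.
rewrite dvdn_mull ?dvdnn //= add0n mulSnr; congr (_ + _)%N.
transitivity (size (iota (ll * d.+1).+1 d)); last by rewrite size_iota.
apply/eqP; rewrite -all_count; apply/allP => j.
rewrite mem_iota => /andP [h1 h2].
rewrite -(subnKC (ltnW h1)) dvdn_addr ?dvdn_mull ?dvdnn // gtnNdvd //.
  by rewrite subn_gt0.
by rewrite ltn_subLR ?(ltnW h1) // addnS -addSn.
Qed.

Definition J := [seq j <- iota 1 L.-1 | ~~ (r.+1 %| j)%N].

Lemma size_J : size J = (l * r)%N.
Proof.
rewrite size_filter.
have := count_nondvd l (ltn0Sn r); rewrite -/L /=.
case: (L) => [|L'] //=.

Qed.

Lemma mem_J j : (j \in J) = [&& (0 < j)%N, (j < L)%N & ~~ (r.+1 %| j)%N].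
Proof.
rewrite mem_filter mem_iota; case: (r.+1 %| j)%N; rewrite /= ?andbF ?andbT //.
case: (L) => [|L'] /=; apply/idP/idP; lia.
Qed.

Lemma uniq_J : uniq J.
Proof. by rewrite filter_uniq // iota_uniq. Qed.


Definition hs := H_rows n r m l omega alpha.
Definition hf (i p : nat) : F :=
  if (i < N)%N then (if (p %/ r.+1 == i)%N then 1 else 0)
  else xx p ^+ nth 0%N J (i - N).

Lemma size_hs : size hs = (N + l * r)%N.
Proof. by rewrite /hs /H_rows size_cat !size_map size_iota -size_J. Qed.

Lemma nth_hs i (p : 'I_n) : (i < size hs)%N -> (nth 0 hs i) 0 p = hf i p.
Proof.
rewrite size_hs /hs /H_rows nth_cat size_map size_iota /hf -/N => hi.
case: ltnP => hiN.
  by rewrite (nth_map 0%N) ?size_iota // nth_iota // /e_vec mxE add0n.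
rewrite (nth_map 0%N); last by rewrite -/J size_J; lia.
by rewrite /V_vec mxE.
Qed.

Lemma inC (c : 'rV[F]_n) :
  (c <= code (H_mat n r m l omega alpha))%MS <->
  (forall i, (i < size hs)%N -> \sum_(p < n) c 0 p * hf i p = 0).
Proof.
rewrite /code sub_kermx; split.
  move/eqP => e i hi; have := congr1 (fun M : 'M[F]_(1, size hs) => M 0 (Ordinal hi)) e.
  rewrite !mxE => e'; apply: (etrans _ e'); apply: eq_bigr => p _; by rewrite !mxE nth_hs.
move=> h; apply/eqP/rowP => i; rewrite !mxE; apply: etrans (h i (ltn_ord i)).
by apply: eq_bigr => p _; rewrite !mxE nth_hs.
Qed.


Notation Cd := (code (H_mat n r m l omega alpha)).

Lemma bp_lt (p : 'I_n) : (p %/ r.+1 < N)%N.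
Proof. by rewrite ltn_divLR // -hl. Qed.

Lemma groupsum (c : 'rV[F]_n) : (c <= Cd)%MS -> forall b, (b < N)%N ->
  \sum_(p < n | (p %/ r.+1 == b)%N) c 0 p = 0.
Proof.
move=> /inC h b hb; have := h b; rewrite size_hs => /(_ (ltn_addr _ hb)).
rewrite /hf hb => e; apply: (etrans _ e); rewrite big_mkcond; apply: eq_bigr => p _.
by case: ifP; rewrite ?mulr1 ?mulr0.
Qed.

Lemma xx_pow_mul (p u : nat) : xx p ^+ (r.+1 * u) = omega ^+ (p %/ r.+1 * (r.+1 * u)).
Proof.
have e : (alpha ^+ (p %% r.+1)) ^+ (r.+1 * u) = 1.
  by rewrite -exprM mulnCA exprM alpha_r1 expr1n.
by rewrite /xx exprMn e mulr1 -exprM.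
Qed.

Lemma orthV (c : 'rV[F]_n) : (c <= Cd)%MS -> forall j, (j <= L)%N ->
  \sum_(p < n) c 0 p * xx p ^+ j = 0.
Proof.
move=> hc j hj; case hd: (r.+1 %| j)%N.
  have [u ->] : exists u, j = (r.+1 * u)%N by exists (j %/ r.+1)%N; rewrite mulnC divnK.
  pose g b := omega ^+ (b * (r.+1 * u)).
  transitivity (\sum_(p < n) c 0 p * \sum_(b < N | b == (p %/ r.+1)%N :> nat) g b).
    apply: eq_bigr => p _; by rewrite big_ord1_eq bp_lt xx_pow_mul.
  under eq_bigr do rewrite big_mkcond big_distrr.
  rewrite exchange_big /= big1 // => b _.
  transitivity (g b * \sum_(p < n | (p %/ r.+1 == b)%N) c 0 p);
    last by rewrite (groupsum hc (ltn_ord b)) mulr0.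
  rewrite big_distrr [RHS]big_mkcond /=.
  apply: eq_bigr => p _; rewrite eq_sym.
  by case: ifP => _; rewrite ?mulr0 // mulrC.
have hj' : j \in J by rewrite mem_J hd andbT; apply/andP; split;
  [case: j hj hd => //; by rewrite dvdn0 | rewrite ltn_neqAle hj andbT;
   apply: contraFN hd => /eqP ->; exact: dvdn_mull].
have := (inC c).1 hc (N + index j J)%N.
rewrite size_hs ltn_add2l -size_J index_mem hj' => /(_ isT) e; apply: (etrans _ e).
apply: eq_bigr => p _; by rewrite /hf ltnNge leq_addr /= addKn nth_index.
Qed.


Lemma xx_injo : injective (fun p : 'I_n => xx p).
Proof. move=> p p' /xx_inj e; apply: val_inj; exact: e. Qed.

Lemma wt_lb (c : 'rV[F]_n) : (c <= Cd)%MS -> c != 0 -> (L.+2 <= wt c)%N.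
Proof.
move=> hc cn0; rewrite leqNgt; apply/negP => hw.
have [p0 hp0] : exists p0, c 0 p0 != 0.
  case: (pickP (fun p => c 0 p != 0)) => [p0 hp0 | h]; first by exists p0.
  by move/eqP: cn0; case; apply/rowP => p; rewrite mxE; move/negbFE: (h p) => /eqP.
pose T := [set p | c 0 p != 0] :\ p0.
have hT : (#|T| <= L)%N.
  have := cardsD1 p0 [set p | c 0 p != 0]; rewrite inE hp0 -/T /= add1n.
  move: hw; rewrite /wt ltnS => hw e; rewrite -ltnS -e; apply: leq_trans hw.
  by apply: subset_leq_card; apply/subsetP => p; rewrite inE.
pose rs := [seq xx (nat_of_ord p) | p <- enum T].
pose f := \prod_(z <- rs) ('X - z%:P).
have sf : (size f <= L.+1)%N by rewrite size_prod_XsubC size_map -cardE.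
have e1 : \sum_(p < n) c 0 p * f.[xx p] = 0.
  under eq_bigr do rewrite horner_coef big_distrr.
  rewrite exchange_big /= big1 // => i _.
  under eq_bigr do rewrite mulrCA.
  rewrite -big_distrr /= orthV ?mulr0 //.
  by rewrite -ltnS (leq_trans (ltn_ord i)).
have e2 : \sum_(p < n) c 0 p * f.[xx p] = c 0 p0 * f.[xx p0].
  rewrite (bigD1 p0) //= big1 ?addr0 // => p hp.
  case: (eqVneq (c 0 p) 0) => [->|hc0]; first by rewrite mul0r.
  have : root f (xx p).
    by rewrite root_prod_XsubC; apply: map_f; rewrite mem_enum !inE hp hc0.
  by move/rootP => ->; rewrite mulr0.
have : c 0 p0 * f.[xx p0] != 0.
  rewrite mulf_neq0 //; apply/negP => /rootP/eqP.
  rewrite -/(root f _) root_prod_XsubC => /mapP [p].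
  rewrite mem_enum => hp /xx_injo e; move: hp; rewrite -e !inE eqxx.
  by [].
by rewrite -e2 e1 eqxx.
Qed.


Lemma Qd_pos : (0 < Qd)%N.
Proof. apply: leq_trans NleQ; rewrite /N; move: m_ge2; case: (m) => //. Qed.

Lemma alpha_neq1 j : ~~ (r.+1 %| j)%N -> alpha ^+ j != 1.
Proof.
apply: contra => /eqP e; rewrite -(dvdn_pmul2l Qd_pos) hQ.
by rewrite (prim_order_dvd homega) exprM -/alpha e.
Qed.

Lemma alpha_xx (p : 'I_n) : exists p' : 'I_n,
  alpha * xx p = xx p' /\ (p' %/ r.+1 = p %/ r.+1)%N.
Proof.
have hp' : (p %/ r.+1 * r.+1 + (p %% r.+1).+1 %% r.+1 < n)%N.
  apply: (@leq_trans ((p %/ r.+1).+1 * r.+1)%N).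
    by rewrite mulSnr ltn_add2l ltn_pmod.
  by rewrite [X in (_ <= X)%N]hl leq_mul2r bp_lt orbT.
exists (Ordinal hp'); split => /=; last by rewrite divnMDl // (divn_small (ltn_pmod _ (ltn0Sn r))) addn0.
rewrite /xx [in RHS]modnMDl [in RHS]divnMDl // (divn_small (ltn_pmod _ (ltn0Sn r))) addn0.
by rewrite modn_mod [in RHS]expr_mod ?alpha_r1 // exprS mulrCA.
Qed.

Lemma sum_split (G : nat -> F) :
  \sum_(i < size hs) G i = \sum_(i < N) G i + \sum_(k < l * r) G (N + k)%N.
Proof.
rewrite -(big_mkord xpredT G) size_hs big_mkord big_split_ord /=.
by [].
Qed.


Lemma indep (y : 'rV[F]_(size hs)) : y *m H_mat n r m l omega alpha = 0 -> y = 0.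
Proof.
move=> hy.
have szp : (0 < size hs)%N by rewrite size_hs /N; move: m_ge2; case: (m).
pose i0 := Ordinal szp.
pose Y i := y 0 (insubd i0 i).
pose Pf z := \sum_(k < l * r) Y (N + k)%N * z ^+ nth 0%N J k.
have rel : forall p : 'I_n, Y (p %/ r.+1)%N + Pf (xx p) = 0.
  move=> p; have := congr1 (fun M : 'M[F]_(1, n) => M 0 p) hy; rewrite !mxE => e.
  rewrite -[RHS]e.
  transitivity (\sum_(i < size hs) Y i * hf i p).
    rewrite (sum_split (fun i => Y i * hf i p)); congr (_ + _).
      rewrite (eq_bigr (fun i : 'I_N => if (i == p %/ r.+1 :> nat)%N then Y i else 0)).
        by rewrite -big_mkcond big_ord1_eq bp_lt.
      move=> i _; rewrite /hf ltn_ord eq_sym; by case: ifP; rewrite ?mulr1 ?mulr0.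
    apply: eq_bigr => i _; by rewrite /hf ltnNge leq_addr /= addKn.
  apply: eq_bigr => i _; by rewrite mxE nth_hs // /Y valKd.
pose D := \sum_(k < l * r) (Y (N + k)%N * (alpha ^+ nth 0%N J k - 1)) *: 'X^(nth 0%N J k).
have Dev : forall z, D.[z] = Pf (alpha * z) - Pf z.
  move=> z; rewrite horner_sum /Pf -sumrB; apply: eq_bigr => i _.
  by rewrite hornerZ hornerXn exprMn mulrBr mulrBl mulr1 !mulrA.
have Dsz : (size D <= L)%N.
  apply: (big_ind (fun P : {poly F} => (size P <= L)%N)).
  - by rewrite size_poly0.
  - by move=> P1 P2 h1 h2; apply: leq_trans (size_polyD _ _) _; rewrite geq_max h1 h2.
  - move=> i _; apply: leq_trans (size_scale_leq _ _) _; rewrite size_polyXn.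
    have : nth 0%N J i \in J by rewrite mem_nth // size_J.
    by rewrite mem_J => /and3P [].
have D0 : D = 0.
  apply/eqP; apply: contraT => Dn0.
  have := max_poly_roots Dn0 (rs := [seq xx (nat_of_ord p) | p <- enum 'I_n]).
  rewrite size_map size_enum_ord.
  have -> : all (root D) [seq xx (nat_of_ord p) | p <- enum 'I_n].
    apply/allP => z /mapP [p _ ->]; apply/rootP; rewrite Dev.
    have [p' [-> hb]] := alpha_xx p; apply/eqP; rewrite subr_eq0; apply/eqP.
    apply: (@addrI _ (Y (p %/ r.+1)%N)); rewrite rel -hb rel //.
  rewrite map_inj_uniq ?enum_uniq; last exact: xx_injo.
  move=> /(_ isT isT) h; move: (leq_trans h Dsz); rewrite hl /L ltnNge leq_mul2r.
  by rewrite leq_addl orbT.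
have YJ : forall kk : 'I_(l * r), Y (N + kk)%N = 0.
  move=> kk; have := congr1 (fun P : {poly F} => P`_(nth 0%N J kk)) D0.
  rewrite coef0 coef_sum (bigD1 kk) //= big1 ?addr0; last first.
    move=> k' hk'; rewrite coefZ coefXn nth_uniq ?size_J // ?uniq_J //.
    have -> : (kk == k' :> nat) = false by rewrite eq_sym; apply: negbTE.
    by rewrite mulr0.
  rewrite coefZ coefXn eqxx mulr1 => /eqP; rewrite mulf_eq0 subr_eq0.
  have : nth 0%N J kk \in J by rewrite mem_nth // size_J.
  rewrite mem_J => /and3P [_ _ /alpha_neq1 /negbTE ->]; by rewrite orbF => /eqP.
have Pf0 : forall z, Pf z = 0.
  by move=> z; rewrite /Pf big1 // => kk _; rewrite YJ mul0r.
have YN : forall b, (b < N)%N -> Y b = 0.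
  move=> b hb.
  have hp : (b * r.+1 < n)%N by rewrite hl ltn_mul2r hb.
  by have := rel (Ordinal hp); rewrite Pf0 addr0 /= mulnK.
apply/rowP => i; rewrite mxE.
have -> : y 0 i = Y i by rewrite /Y valKd.
case: (ltnP i N) => hi; first exact: YN.
have hk : (i - N < l * r)%N by have := ltn_ord i; have := size_hs; lia.
by have := YJ (Ordinal hk); rewrite /= subnKC.
Qed.


Lemma rankH : \rank (H_mat n r m l omega alpha) = size hs.
Proof.
apply/eqP; rewrite -[_ == _]/(row_free _) -kermx_eq0.
apply/eqP/row_matrixP => i; rewrite row0; apply: indep.
by rewrite -row_mul mulmx_ker row0.
Qed.

Lemma rankC : \rank Cd = k.
Proof.
rewrite /code mxrank_ker mxrank_tr rankH size_hs /N hm hl; nia.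
Qed.

Lemma exists_wt : exists2 c : 'rV[F]_n, (c <= Cd)%MS & (c != 0) /\ wt c = L.+2.
Proof.
have hLL : L = (l * r + l)%N by rewrite /L mulnS addnC.
have hK : (L.+2 <= n)%N.
  have := m_ge2; rewrite hl mulnS hLL mulnDl; nia.
pose g kk := if (kk <= l)%N then kk else (kk + (N - l - 1))%N.
pose A : 'M[F]_(L.+2, L.+1) := \matrix_(c, kk) hf (g kk) c.
have kA : kermx A != 0.
  rewrite -mxrank_eq0 mxrank_ker -lt0n subn_gt0.
  by apply: leq_ltn_trans (rank_leq_col A) _.
pose y := nz_row (kermx A).
have yn0 : y != 0 by rewrite nz_row_eq0.
have yA : y *m A = 0 by apply/sub_kermxP; exact: nz_row_sub.
pose c := \row_(p < n) (if (p < L.+2)%N then y 0 (inord p) else 0).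
have cC : (c <= Cd)%MS.
  apply/inC => i hi.
  transitivity (\sum_(p < L.+2) y 0 (inord p) * hf i p).
    rewrite (big_ord_widen _ (fun p => y 0 (inord p) * hf i p) hK) [RHS]big_mkcond.
    by apply: eq_bigr => p _; rewrite mxE; case: ifP; rewrite ?mul0r.
  have hsz := size_hs.
  case: (boolP [&& l < i & i < N]%N) => hli.
    apply: big1 => p _; rewrite /hf.
    move/andP: hli => [h1 h2]; rewrite h2.
    case: eqP => [e|_]; last by rewrite mulr0.
    exfalso.
    have : (p %/ r.+1 < l.+1)%N.
      rewrite ltn_divLR // mulSn; have := ltn_ord p; have hL' : L = (l * r.+1)%N by []; lia.
    rewrite e; lia.
  pose kk := if (i <= l)%N then i else (i - (N - l - 1))%N.
  have hkk : (kk < L.+1)%N by rewrite /kk; case: ifP; rewrite /N in hli hsz *; lia.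
  have hg : g kk = i by rewrite /g /kk; case: ifP; case: ifP; rewrite /N in hli hsz *; lia.
  have := congr1 (fun M : 'M[F]_(1, L.+1) => M 0 (Ordinal hkk)) yA.
  rewrite !mxE => e; apply: etrans e; apply: eq_bigr => p _.
  by rewrite mxE /= hg inord_val.
have cn0 : c != 0.
  move: yn0; apply: contra => /eqP c0; apply/eqP/rowP => j.
  have hj : (j < n)%N by apply: leq_trans (ltn_ord j) hK.
  have := congr1 (fun M : 'M[F]_(1, n) => M 0 (Ordinal hj)) c0.
  by rewrite !mxE /= ltn_ord inord_val.
exists c => //; split => //.
apply/eqP; rewrite eqn_leq wt_lb // andbT.
apply: (@leq_trans #|[set widen_ord hK j | j in 'I_L.+2]|); last first.
  by apply: leq_trans (leq_imset_card _ _) _; rewrite card_ord.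
apply: subset_leq_card; apply/subsetP => p; rewrite inE mxE.
case: ifP => hp; last by rewrite eqxx.
move=> _; apply/imsetP; exists (Ordinal hp) => //; exact: val_inj.
Qed.


Definition Jset (i : 'I_n) : {set 'I_n} :=
  [set p : 'I_n | (p %/ r.+1 == i %/ r.+1)%N && (p != i)].

Lemma repair_eq (c : 'rV[F]_n) (i : 'I_n) : (c <= Cd)%MS ->
  c 0 i = - \sum_(j in Jset i) c 0 j.
Proof.
move=> hc; have := groupsum hc (bp_lt i).
rewrite (bigD1 i) //= => /eqP; rewrite addr_eq0 => /eqP ->.
congr (- _); apply: eq_bigl => p; by rewrite inE.
Qed.

Lemma card_Jset (i : 'I_n) : (#|Jset i| <= r)%N.
Proof.
pose G := [set p : 'I_n | (p %/ r.+1 == i %/ r.+1)%N].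
have -> : Jset i = G :\ i by apply/setP => p; rewrite !inE andbC.
have := cardsD1 i G; rewrite inE eqxx add1n => e.
rewrite -ltnS -e.
pose f (p : 'I_n) : 'I_r.+1 := Ordinal (ltn_pmod p (ltn0Sn r)).
rewrite -(card_in_imset (f := f)); first by rewrite -[X in (_ <= X)%N]card_ord max_card.
move=> p p'; rewrite !inE => /eqP h1 /eqP h2 /(congr1 val) /= h3.
by apply: val_inj; rewrite /= (divn_eq p r.+1) (divn_eq p' r.+1) h1 h2 h3.
Qed.

Lemma main_sec :
  let t := (l * r.+1)%N in
  let H := H_mat n r m l omega alpha in
  let C := code H in
  [/\ size (H_rows n r m l omega alpha) = (m + l + l * r)%N,
      \rank H = (m + l + l * r)%N &
      is_nkd_code C k t.+2] /\
  [/\ (forall c : 'rV[F]_n, (c <= C)%MS -> forall b : nat, (b < m + l)%N ->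
          \sum_(p < n | (p %/ r.+1 == b)%N) c 0 p = 0),
      addition_based_repair C &
      all_symbol_locality C r].
Proof using All.
move=> t H C.
have sz : size (H_rows n r m l omega alpha) = (m + l + l * r)%N by exact: size_hs.
split; split => //.
- by rewrite /H rankH.
- split; first exact: rankC.
  split; first exact: exists_wt.
  by move=> c hc cn0; apply: wt_lb.
- by move=> c hc b hb; apply: groupsum.
- move=> i; exists (Jset i); split; first by rewrite /Jset inE !eqxx.
  by move=> c hc; apply: repair_eq.
- move=> i; exists (Jset i); split; [by rewrite /Jset inE !eqxx | exact: card_Jset | ].
  exists (fun x => - \sum_(j in Jset i) x j); split.
    by move=> x y hxy; congr (- _); apply: eq_bigr => j hj; apply: hxy.
  by move=> c hc; apply: repair_eq.
Qed.

End Main.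

Theorem mainTheorem7 (F : finFieldType) (q n k r m l : nat) (omega : F)
  (hq : #|F| = q)
  (hnq : (n <= q - 1)%N) (hr0 : (0 < r)%N) (hrk : (r < k)%N) (hkn : (k <= n)%N)
  (hrdk : (r %| k)%N) (hrdn : (r.+1 %| n)%N) (hrdq : (r.+1 %| q - 1)%N)
  (hm : k = (m * r)%N) (hl : n = ((m + l) * r.+1)%N)
  (homega : (q - 1).-primitive_root omega) :
  let alpha := omega ^+ ((q - 1) %/ r.+1) in
  let t := (l * r.+1)%N in
  let H := H_mat n r m l omega alpha in
  let C := code H in
  [/\ size (H_rows n r m l omega alpha) = (m + l + l * r)%N,
      \rank H = (m + l + l * r)%N &
      is_nkd_code C k t.+2] /\
  [/\ (forall c : 'rV[F]_n, (c <= C)%MS -> forall b : nat, (b < m + l)%N ->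
          \sum_(p < n | (p %/ r.+1 == b)%N) c 0 p = 0),
      addition_based_repair C &
      all_symbol_locality C r].
Proof.
exact: (@main_sec F q n k r m l omega hq hnq hr0 hrk hkn hrdk hrdn hrdq hm hl homega).
Qed.
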